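(* Let $G$ be a directed acyclic graph on vertex set $V$ and let $\pi:V\to\{1,\dots,n\}$ be a bijection such that $xy\in E(G)$ implies $\pi(x)<\pi(y)$. Let $u,v\in V$ with $\pi(u)>\pi(v)$ be such that $G\cup\{uv\}$ is still acyclic. Let $W=\{w\in V:\pi(w)\in[\pi(v),\pi(u)]\}$, let $T\subseteq W$ be the set of vertices of $W$ reachable from $v$ in $G$ (including $v$), let $S\subseteq W$ be the set of vertices of $W$ that can reach $u$ in $G$ (including $u$), and let $Z=W\setminus(S\cup T)$. Then in $G\cup\{uv\}$: no vertex $t\in T$ can reach a vertex $s\in S$; no vertex $t\in T$ can reach a vertex $z\in Z$; and no vertex $z\in Z$ can reach a vertex $s\in S$. *)

(* Defs.v *)
From mathcomp Require Import all_boot.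
Set Implicit Arguments. Unset Strict Implicit. Unset Printing Implicit Defensive.

(* A directed graph on a finite vertex type V is an edge relation e : rel V.
   Reachability ("x can reach y") is connect e x y: there is a directed path
   (possibly of length 0) from x to y. *)

(* acyclic: no directed cycle, i.e. no edge x -> y with a path back y ~> x
   (this also excludes loops). *)
Definition acyclic (V : finType) (e : rel V) : Prop :=
  forall x y, e x y -> ~~ connect e y x.

Definition add_edge (V : finType) (e : rel V) (u v : V) : rel V :=
  fun x y => e x y || ((x == u) && (y == v)).

(* Main.v *)
Require Import Defs.
From mathcomp Require Import all_boot.

Lemma split_path (V : finType) (e : rel V) (u v x y : V) :
  connect (add_edge e u v) x y -> connect e x y || connect e x u.
Proof.
move=> /connectP[p Hp ->]; elim: p x Hp => [|z p IH] x /=.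
  by rewrite connect0.
case/andP=> /orP[exz|/andP[/eqP -> _]] /IH /orP[H|H].
- by rewrite (connect_trans (connect1 exz) H).
- by rewrite (connect_trans (connect1 exz) H) orbT.
- by rewrite connect0 orbT.
- by rewrite connect0 orbT.
Qed.

Lemma sub_add (V : finType) (e : rel V) (u v x y : V) :
  connect e x y -> connect (add_edge e u v) x y.
Proof.
apply: connect_sub => a b hab; apply: connect1; by rewrite /add_edge hab.
Qed.

Theorem lemma2 (V : finType) (e : rel V) (n : nat) (pi : V -> 'I_n)
  (Hacyc : acyclic e)
  (Hpi : bijective pi)
  (Horder : forall x y, e x y -> pi x < pi y)
  (u v : V) (Huv : pi v < pi u)
  (Hacyc' : acyclic (add_edge e u v)) :
  let W := [set w | pi v <= pi w <= pi u] in
  let T := [set w in W | connect e v w] in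
  let S := [set w in W | connect e w u] in
  let Z := W :\: (S :|: T) in
  [/\ forall t s, t \in T -> s \in S -> ~~ connect (add_edge e u v) t s,
      forall t z, t \in T -> z \in Z -> ~~ connect (add_edge e u v) t z &
      forall z s, z \in Z -> s \in S -> ~~ connect (add_edge e u v) z s].
Proof.
move=> W T S Z.
have Hvu : ~~ connect e v u.
  apply/negP=> H; have := Hacyc' u v; rewrite /add_edge !eqxx orbT.
  by move=> /(_ isT); rewrite (sub_add _ _ u v _ _ H).
split.
- move=> t s; rewrite !inE => /andP[_ vt] /andP[_ su].
  apply/negP=> /split_path /orP[ts|tu]; apply/negP: Hvu; apply/negPn.
    by rewrite (connect_trans vt (connect_trans ts su)).
  by rewrite (connect_trans vt tu).
- move=> t z; rewrite !inE => /andP[_ vt] /andP[Hz zW].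
  apply/negP=> /split_path /orP[tz|tu].
    by move: Hz; rewrite (connect_trans vt tz) zW !orbT.
  by apply/negP: Hvu; apply/negPn; rewrite (connect_trans vt tu).
- move=> z s; rewrite !inE => /andP[Hz zW] /andP[_ su].
  apply/negP=> /split_path /orP[zs|zu].
    by move: Hz; rewrite (connect_trans zs su) zW.
  by move: Hz; rewrite zu zW.
Qed.
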